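(* Let $T\subseteq 2^{<\omega}$ be a tree of positive measure $p$ and let $q<1$ be a positive rational. Then there exist a tree $S\subseteq 2^{<\omega}$ of measure at least $q$ and a Turing functional $\Phi$ such that $\Phi(A)$ is an infinite path through $T$ for every infinite path $A$ through $S$.
   Context: The measure of a tree $T\subseteq 2^{<\omega}$ is the Lebesgue (uniform, fair-coin) measure of the set of its infinite paths in $2^\omega$. *)

(* Defs.v *)
From Stdlib Require Import Reals QArith List.
Open Scope nat_scope.
Import ListNotations.

Definition prefix (s t : list bool) : Prop := exists r, t = s ++ r.

Definition initseg (A : nat -> bool) (n : nat) : list bool := map A (seq 0 n).

Definition is_tree (T : list bool -> bool) : Prop :=
  forall s t, prefix s t -> T t = true -> T s = true.

Definition is_path (T : list bool -> bool) (A : nat -> bool) : Prop :=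
  forall n, T (initseg A n) = true.

Fixpoint all_strings (n : nat) : list (list bool) :=
  match n with
  | O => [[]]
  | S k => flat_map (fun s => [false :: s; true :: s]) (all_strings k)
  end.

Definition level_count (T : list bool -> bool) (n : nat) : nat :=
  length (filter T (all_strings n)).

(** [tree_measure T m] : the Lebesgue (fair-coin) measure of the set [T] of
    infinite paths through the tree T is m.  Since [T] is the decreasing
    intersection of the clopen sets generated by the level-n nodes of T,
    this measure is the limit of |T cap 2^n| / 2^n. *)
Definition tree_measure (T : list bool -> bool) (m : R) : Prop :=
  Un_cv (fun n => INR (level_count T n) / 2 ^ n)%R m.

Inductive prf : Type :=
| PRzero : prf
| PRsucc : prf
| PRproj : nat -> prf
| PRcomp : prf -> list prf -> prf
| PRrec  : prf -> prf -> prf.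

Fixpoint pr_eval (f : prf) (xs : list nat) {struct f} : nat :=
  match f with
  | PRzero => 0
  | PRsucc => S (hd 0 xs)
  | PRproj i => nth i xs 0
  | PRcomp g gs => pr_eval g (map (fun h => pr_eval h xs) gs)
  | PRrec g h =>
      match xs with
      | [] => pr_eval g []
      | x :: ys =>
          (fix r (k : nat) : nat :=
             match k with
             | O => pr_eval g ys
             | S k' => pr_eval h (k' :: r k' :: ys)
             end) x
      end
  end.

Fixpoint encode (s : list bool) : nat :=
  match s with
  | [] => 0
  | b :: s' => 2 * encode s' + 1 + (if b then 1 else 0)
  end.

Fixpoint decode_aux (fuel n : nat) : list bool :=
  match fuel with
  | O => []
  | S fuel' =>
      match n with
      | O => []
      | S m => Nat.odd m :: decode_aux fuel' (Nat.div2 m)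
      end
  end.

Definition decode (n : nat) : list bool := decode_aux n n.

(** A Turing functional is presented, as usual, by a computable map
    phi : 2^{<omega} -> 2^{<omega} on strings which is monotone for the
    prefix order; Phi(A) = union_k phi(A|k).  Every Turing functional has
    such a presentation with phi primitive recursive (run the oracle machine
    on sigma for |sigma| steps), and conversely. *)
Definition str_map (e : prf) (s : list bool) : list bool :=
  decode (pr_eval e [encode s]).

Definition is_turing_functional (e : prf) : Prop :=
  forall s t, prefix s t -> prefix (str_map e s) (str_map e t).

(** [Phi_output e A X] : Phi^A is total and equals the infinite sequence X
    (every initial segment of X is output on some finite part of A;
    by monotonicity all outputs are then initial segments of X). *)
Definition Phi_output (e : prf) (A X : nat -> bool) : Prop :=
  forall n, exists k, prefix (initseg X n) (str_map e (initseg A k)).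

(* Main.v *)
Require Import Defs.
From Stdlib Require Import Reals QArith Qreals List Arith Lia Lra Classical.
Import ListNotations.
Open Scope nat_scope.

Definition padd : prf := PRrec (PRproj 0) (PRcomp PRsucc [PRproj 1]).
Lemma padd_ok : forall x y, pr_eval padd [x; y] = x + y.
Proof. induction x; intros; simpl in *; auto. Qed.

Definition pg (b : bool) : prf :=
  let g := PRcomp PRsucc [PRcomp padd [PRproj 0; PRproj 0]] in
  if b then PRcomp PRsucc [g] else g.
Lemma pg_ok : forall b x, pr_eval (pg b) [x] = 2 * x + 1 + (if b then 1 else 0).
Proof. intros [|] x; cbn -[padd]; rewrite padd_ok; lia. Qed.


Fixpoint pre (s : list bool) : prf :=
  match s with [] => PRproj 0 | b :: s' => PRcomp (pg b) [pre s'] end.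
Lemma pre_ok : forall s t, pr_eval (pre s) [encode t] = encode (s ++ t).
Proof. induction s; intros; simpl; auto. rewrite IHs, pg_ok. reflexivity. Qed.

Lemma decode_aux_ok : forall s f, encode s <= f -> decode_aux f (encode s) = s.
Proof.
  induction s as [|b s IH]; intros f Hf.
  - destruct f; reflexivity.
  - destruct f as [|f]; simpl in Hf; [destruct b; lia|].
    assert (E : encode (b :: s) = S (2 * encode s + (if b then 1 else 0))).
    { simpl; destruct b; lia. }
    rewrite E. cbn [decode_aux]. f_equal.
    + destruct b. rewrite Nat.odd_odd; auto.
      rewrite Nat.add_0_r, Nat.odd_even; auto.
    + destruct b. rewrite Nat.add_1_r, Nat.div2_succ_double. apply IH. lia.
      rewrite Nat.add_0_r, Nat.div2_double. apply IH. lia.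
Qed.
Lemma decode_encode : forall s, decode (encode s) = s.
Proof. intros; unfold decode; apply decode_aux_ok; lia. Qed.

Lemma str_map_pre : forall s t, str_map (pre s) t = s ++ t.
Proof. intros; unfold str_map; rewrite pre_ok, decode_encode; auto. Qed.

Definition ext (s : list bool) (A : nat -> bool) (n : nat) : bool :=
  if n <? length s then nth n s false else A (n - length s).

Lemma map_nth_self : forall l : list bool, map (fun i => nth i l false) (seq 0 (length l)) = l.
Proof.
  induction l; simpl; auto. f_equal. rewrite <- seq_shift, map_map. simpl. exact IHl.
Qed.

Lemma initseg_ext : forall s A n, initseg (ext s A) (length s + n) = s ++ initseg A n.
Proof.
  intros. unfold initseg. rewrite seq_app, map_app. f_equal.
  - transitivity (map (fun i => nth i s false) (seq 0 (length s))); [|apply map_nth_self].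
    apply map_ext_in. intros a Ha.
    apply in_seq in Ha. unfold ext. destruct (Nat.ltb_spec a (length s)); [auto|lia].
  - rewrite Nat.add_0_l. rewrite <- (Nat.add_0_r (length s)). generalize 0.
    induction n; intros st; simpl; auto. f_equal.
    + unfold ext. destruct (Nat.ltb_spec (length s + st) (length s)); [lia|]. f_equal; lia.
    + rewrite <- IHn. f_equal. f_equal. lia.
Qed.

Lemma initseg_prefix : forall X n m, n <= m -> prefix (initseg X n) (initseg X m).
Proof.
  intros. unfold initseg. replace m with (n + (m - n)) by lia.
  rewrite seq_app, map_app. eexists; reflexivity.
Qed.

Definition shiftT (T : list bool -> bool) (s : list bool) := fun t => T (s ++ t).

Lemma shift_tree : forall T s, is_tree T -> is_tree (shiftT T s).
Proof.
  unfold is_tree, shiftT. intros T s HT a b [r Hr] Hb. apply (HT _ (s ++ b)); auto.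
  exists r. subst. rewrite app_assoc. auto.
Qed.

Lemma path_part : forall T s, is_tree T ->
  exists Phi : prf,
      is_turing_functional Phi /\
      forall A : nat -> bool, is_path (shiftT T s) A ->
        exists X : nat -> bool, Phi_output Phi A X /\ is_path T X.
Proof.
  intros T s HT. exists (pre s). split.
  - intros a b [r Hr]. rewrite !str_map_pre. subst. exists r. rewrite app_assoc; auto.
  - intros A HA. exists (ext s A). split.
    + intros n. exists n. rewrite str_map_pre, <- initseg_ext. apply initseg_prefix. lia.
    + intros n. apply (HT _ (initseg (ext s A) (length s + n))).
      apply initseg_prefix; lia. rewrite initseg_ext. apply HA.
Qed.


Definition sumN {A} (f : A -> nat) (L : list A) := fold_right (fun x acc => f x + acc) 0 L.

Lemma lc_cons : forall T n, level_count T (S n) =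
  level_count (fun s => T (false :: s)) n + level_count (fun s => T (true :: s)) n.
Proof.
  intros. unfold level_count. simpl. induction (all_strings n); simpl; auto.
  destruct (T (false :: a)), (T (true :: a)); simpl; lia.
Qed.

Lemma sumN_flat : forall (f : list bool -> nat) L,
  sumN f (flat_map (fun s => [false :: s; true :: s]) L) = sumN (fun s => f (false::s) + f (true::s)) L.
Proof. induction L; simpl; auto. rewrite IHL. lia. Qed.

Lemma sumN_add : forall {A} (f g : A -> nat) L, sumN (fun x => f x + g x) L = sumN f L + sumN g L.
Proof. induction L; simpl; auto. rewrite IHL. lia. Qed.

Lemma lc_split : forall k T j, level_count T (k + j) =
  sumN (fun s => level_count (shiftT T s) j) (all_strings k).
Proof.
  induction k; intros T j.
  - simpl. rewrite Nat.add_0_r. reflexivity.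
  - simpl (S k + j). rewrite lc_cons, !IHk. simpl all_strings. rewrite sumN_flat, sumN_add.
    reflexivity.
Qed.

Lemma sumN_le : forall {A} (f g : A -> nat) L, (forall x, In x L -> f x <= g x) -> sumN f L <= sumN g L.
Proof. induction L; simpl; intros; auto. specialize (IHL (fun x H' => H x (or_intror H'))). specialize (H a (or_introl eq_refl)). lia. Qed.

Lemma lc_le_2 : forall T n, is_tree T -> level_count T (S n) <= 2 * level_count T n.
Proof.
  intros T n HT. replace (S n) with (n + 1) by lia. rewrite lc_split.
  rewrite <- (Nat.add_0_r n) at 2. rewrite lc_split.
  assert (G : forall L, 2 * sumN (fun s => level_count (shiftT T s) 0) L = sumN (fun s => 2 * level_count (shiftT T s) 0) L).
  { induction L; simpl in *; lia. }
  rewrite G. apply sumN_le. intros s _. unfold level_count, shiftT. simpl.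
  destruct (T (s ++ [])) eqn:E; simpl.
  - destruct (T (s ++ [false])), (T (s ++ [true])); simpl; lia.
  - assert (forall b, T (s ++ [b]) = false).
    { intros b. destruct (T (s ++ [b])) eqn:E2; auto. rewrite <- E. symmetry. apply (HT _ (s ++ [b])); auto.
      exists [b]. rewrite app_nil_r. auto. }
    rewrite !H. simpl. lia.
Qed.

Open Scope R_scope.

Definition ratio (T : list bool -> bool) (n : nat) := INR (level_count T n) / 2 ^ n.

Lemma ratio_decr : forall T, is_tree T -> Un_decreasing (ratio T).
Proof.
  intros T HT n. unfold ratio. pose proof (lc_le_2 T n HT) as H.
  apply le_INR in H. rewrite mult_INR in H. simpl INR in H.
  assert (Hp : 0 < 2 ^ n) by (apply pow_lt; lra).
  simpl pow. replace (INR (level_count T (S n)) / (2 * 2 ^ n)) with ((INR (level_count T (S n)) / 2) / 2 ^ n) by (field; lra).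
  unfold Rdiv. apply Rmult_le_compat_r. left; apply Rinv_0_lt_compat; auto. lra.
Qed.

Lemma decr_le : forall u, Un_decreasing u -> forall n m, (n <= m)%nat -> u m <= u n.
Proof.
  intros u Hu n m Hnm. induction Hnm. lra. specialize (Hu m). lra.
Qed.

Lemma lim_ge : forall u l c, (forall n, c <= u n) -> Un_cv u l -> c <= l.
Proof.
  intros u l c H Hl. destruct (Rle_or_lt c l); auto.
  destruct (Hl (c - l)) as [N HN]; [lra|]. specialize (HN N (le_n N)). specialize (H N).
  unfold Rdist in HN. apply Rabs_def2 in HN. lra.
Qed.

Lemma decr_lim_le : forall u l, Un_decreasing u -> Un_cv u l -> forall n, l <= u n.
Proof.
  intros u l Hu Hl n. destruct (Rle_or_lt l (u n)); auto.
  destruct (Hl (l - u n)) as [N HN]; [lra|]. specialize (HN (max N n) (Nat.le_max_l _ _)).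
  pose proof (decr_le u Hu n (max N n) (Nat.le_max_r _ _)).
  unfold Rdist in HN. apply Rabs_def2 in HN. lra.
Qed.

Lemma ratio_ge0 : forall T n, 0 <= ratio T n.
Proof. intros. unfold ratio. unfold Rdiv. apply Rmult_le_pos. apply pos_INR. left; apply Rinv_0_lt_compat, pow_lt; lra. Qed.

Lemma ratio_cv : forall T, is_tree T -> exists m, Un_cv (ratio T) m.
Proof.
  intros T HT. destruct (decreasing_cv (ratio T)) as [m Hm].
  apply ratio_decr; auto.
  exists 0. intros x [i ->]. unfold opp_seq. pose proof (ratio_ge0 T i). lra.
  eauto.
Qed.

Lemma uniformJ : forall (u : list bool -> nat -> R) c L,
  (forall s, Un_decreasing (u s)) ->
  (forall s, In s L -> exists j, u s j < c) -> exists J, forall s, In s L -> u s J < c.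
Proof.
  induction L; intros Hd H. exists 0%nat. intros s [].
  destruct (H a (or_introl eq_refl)) as [j Hj].
  destruct IHL as [J HJ]; auto. intros; apply H; right; auto.
  exists (max j J). intros s [->|Hs].
  - pose proof (decr_le _ (Hd s) j (max j J) (Nat.le_max_l _ _)). lra.
  - pose proof (decr_le _ (Hd s) J (max j J) (Nat.le_max_r _ _)). specialize (HJ s Hs). lra.
Qed.

Definition sumR {A} (f : A -> R) (L : list A) := fold_right (fun x acc => f x + acc) 0 L.

Lemma INR_sumN : forall {A} (f : A -> nat) L, INR (sumN f L) = sumR (fun x => INR (f x)) L.
Proof. induction L; simpl; auto. rewrite plus_INR, IHL; auto. Qed.

Lemma sumR_le : forall {A} (f g : A -> R) L, (forall x, In x L -> f x <= g x) -> sumR f L <= sumR g L.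
Proof. induction L; simpl; intros. lra. specialize (IHL (fun x H' => H x (or_intror H'))). specialize (H a (or_introl eq_refl)). lra. Qed.

Lemma sumR_scale : forall {A} (f : A -> R) c L, sumR (fun x => c * f x) L = c * sumR f L.
Proof. induction L; simpl; auto. lra. rewrite IHL. lra. Qed.

Lemma lc_zero : forall U j, is_tree U -> U [] = false -> level_count U j = 0%nat.
Proof.
  intros. unfold level_count. induction (all_strings j); simpl; auto.
  destruct (U a) eqn:E; auto. exfalso. assert (U [] = true) by (apply (H _ a); auto; exists a; auto). congruence.
Qed.

Lemma main_sigma : forall T p q, is_tree T -> Un_cv (ratio T) p -> 0 < p -> 0 < q < 1 ->
  exists s, forall j, q <= ratio (shiftT T s) j.
Proof.
  intros T p q HT Hc Hp Hq.
  destruct (Hc (p / q - p)) as [k Hk].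
  { apply Rlt_Rminus. apply Rmult_lt_reg_r with q; [lra|]. unfold Rdiv. rewrite Rmult_assoc, Rinv_l; nra. }
  specialize (Hk k (le_n k)). unfold Rdist in Hk. apply Rabs_def2 in Hk.
  assert (Hk2 : INR (level_count T k) * q < 2 ^ k * p).
  { assert (Hp2 : 0 < 2 ^ k) by (apply pow_lt; lra). unfold ratio in Hk.
    assert (INR (level_count T k) / 2 ^ k < p / q) by lra.
    apply Rmult_lt_compat_r with (r := 2 ^ k * q) in H; [|nra].
    replace (INR (level_count T k) / 2 ^ k * (2 ^ k * q)) with (INR (level_count T k) * q) in H by (field; lra).
    replace (p / q * (2 ^ k * q)) with (2 ^ k * p) in H by (field; lra). lra. }
  apply NNPP. intro Hn.
  assert (Hall : forall s, In s (all_strings k) -> exists j, ratio (shiftT T s) j < q).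
  { intros s _. apply NNPP. intro H2. apply Hn. exists s. intros j. apply Rnot_lt_le. intro H3. apply H2; eauto. }
  destruct (uniformJ (fun s => ratio (shiftT T s)) q _ (fun s => ratio_decr _ (shift_tree T s HT)) Hall) as [J HJ].
  pose proof (decr_lim_le _ _ (ratio_decr T HT) Hc (k + J)) as H1.
  unfold ratio in H1. rewrite lc_split, INR_sumN in H1.
  assert (H2 : sumR (fun x => INR (level_count (shiftT T x) J)) (all_strings k)
     <= sumR (fun x => (q * 2 ^ J) * INR (level_count (shiftT T x) 0)) (all_strings k)).
  { apply sumR_le. intros s Hs. specialize (HJ s Hs). unfold ratio in HJ.
    assert (HpJ : 0 < 2 ^ J) by (apply pow_lt; lra).
    destruct (shiftT T s []) eqn:E.
    - unfold level_count at 2. simpl. rewrite E. simpl.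
      apply Rmult_lt_compat_r with (r := 2 ^ J) in HJ; auto.
      unfold Rdiv in HJ. rewrite Rmult_assoc, Rinv_l in HJ; lra.
    - rewrite !lc_zero; auto using shift_tree. simpl; lra. }
  rewrite sumR_scale, <- (INR_sumN (fun x => level_count (shiftT T x) 0)), <- (lc_split k T 0), Nat.add_0_r in H2.
  assert (HpJ : 0 < 2 ^ J) by (apply pow_lt; lra).
  assert (Hp2 : 0 < 2 ^ k) by (apply pow_lt; lra).
  rewrite pow_add in H1.
  assert (H3 : p * (2 ^ k * 2 ^ J) <= q * 2 ^ J * INR (level_count T k)).
  { apply Rmult_le_compat_r with (r := 2 ^ k * 2 ^ J) in H1; [|nra].
    unfold Rdiv in H1. rewrite Rmult_assoc, Rinv_l in H1; nra. }
  nra.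
Qed.

Close Scope R_scope. Open Scope nat_scope.

Theorem proposition4p4 :
  forall (T : list bool -> bool) (p : R),
    is_tree T -> tree_measure T p -> (0 < p)%R ->
  forall q : Q, (0 < q)%Q -> (q < 1)%Q ->
  exists (S : list bool -> bool) (m : R),
    is_tree S /\ tree_measure S m /\ (Q2R q <= m)%R /\
    exists Phi : prf,
      is_turing_functional Phi /\
      forall A : nat -> bool, is_path S A ->
        exists X : nat -> bool, Phi_output Phi A X /\ is_path T X.
Proof.
  intros T p HT Hm Hp q Hq0 Hq1.
  apply Qlt_Rlt in Hq0. apply Qlt_Rlt in Hq1.
  replace (Q2R 0) with 0%R in Hq0 by (unfold Q2R; simpl; lra).
  replace (Q2R 1) with 1%R in Hq1 by (unfold Q2R; simpl; lra).
  destruct (main_sigma T p (Q2R q) HT Hm Hp (conj Hq0 Hq1)) as [s Hs].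
  destruct (ratio_cv (shiftT T s) (shift_tree T s HT)) as [m Hmm].
  exists (shiftT T s), m. split; [apply shift_tree; auto|]. split; [exact Hmm|]. split.
  - eapply lim_ge; eauto.
  - apply path_part; auto.
Qed.
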